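(* Let $M\ge2$, let $\pi^\star$ lie in the interior of the simplex $\Delta_M$, and define $V:\mathbb R^{M-1}\to\mathbb R$ by $V(S)=\log\big(1+\sum_{k=1}^{M-1}e^{S^{(k)}}\big)-\langle S,\pi^\star_{-M}\rangle$, so that $\nabla V(S)=\pi_{-M}(S)-\pi^\star_{-M}$. Then there exist $c_\infty>0$ and $R<\infty$ such that $\|\nabla V(S)\|\ge c_\infty$ for all $S\notin C_R:=\{S:V(S)\le R\}$. Moreover such a $c_\infty$ can be chosen with $c_\infty\le\mathrm{dist}(\pi^\star,\partial\Delta_M)$, and in particular with $c_\infty\le\min_{1\le j\le M}\pi^\star_j$.
   Context: $\pi^\star_{-M}=(\pi^\star_1,\dots,\pi^\star_{M-1})$. $\pi(S)$ is the softmax map $\pi_k(S)=e^{S^{(k)}}/(1+\sum_{j=1}^{M-1}e^{S^{(j)}})$ for $k\le M-1$, $\pi_M(S)=1/(1+\sum_{j=1}^{M-1}e^{S^{(j)}})$, and $\pi_{-M}(S)=(\pi_1(S),\dots,\pi_{M-1}(S))$. $\partial\Delta_M$ is the relative boundary of the simplex. *)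

(* Defs.v *)
From mathcomp Require Import all_boot all_order all_algebra.
From mathcomp Require Import all_classical all_reals all_analysis.
Set Implicit Arguments. Unset Strict Implicit. Unset Printing Implicit Defensive.
Import Order.TTheory GRing.Theory Num.Theory.
Local Open Scope ring_scope.
Local Open Scope classical_set_scope.

Section Defs.
Variable R : realType.

Definition enorm (n : nat) (v : 'I_n -> R) : R :=
  Num.sqrt (\sum_(i < n) v i ^+ 2).

Definition in_simplex (M : nat) (x : 'I_M -> R) : Prop :=
  (forall j, 0 <= x j) /\ \sum_(j < M) x j = 1.
Definition in_simplex_interior (M : nat) (x : 'I_M -> R) : Prop :=
  (forall j, 0 < x j) /\ \sum_(j < M) x j = 1.

Definition simplex_relbd (M : nat) : set ('I_M -> R) :=
  [set x | in_simplex x /\ exists j, x j = 0].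

Definition dist_simplex_bd (M : nat) (p : 'I_M -> R) : R :=
  inf [set enorm (fun i => p i - x i) | x in @simplex_relbd M].

Definition lowidx (M : nat) (k : 'I_M.-1) : 'I_M := widen_ord (leq_pred M) k.

Definition Vfun (M : nat) (pistar : 'I_M -> R) (S : 'I_M.-1 -> R) : R :=
  ln (1 + \sum_(k < M.-1) expR (S k)) - \sum_(k < M.-1) S k * pistar (lowidx k).

Definition softmax_low (M : nat) (S : 'I_M.-1 -> R) (k : 'I_M.-1) : R :=
  expR (S k) / (1 + \sum_(j < M.-1) expR (S j)).

Definition gradV (M : nat) (pistar : 'I_M -> R) (S : 'I_M.-1 -> R) : 'I_M.-1 -> R :=
  fun k => softmax_low S k - pistar (lowidx k).

End Defs.

(* Main.v *)
Require Import Defs.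
From mathcomp Require Import all_boot all_order all_algebra.
From mathcomp Require Import all_classical all_reals all_analysis.
From mathcomp Require Import lra.
Import Order.TTheory GRing.Theory Num.Theory.
Local Open Scope ring_scope.

Lemma norm_le_enorm {R : realType} {n} (v : 'I_n -> R) k : `|v k| <= enorm v.
Proof.
rewrite /enorm -sqrtr_sqr ler_wsqrtr // (bigD1 k) //= lerDl.
by apply: sumr_ge0 => i _; rewrite sqr_ge0.
Qed.

Lemma core (R : realType) (n : nat) (pistar : 'I_n.+1 -> R)
  (hpi : in_simplex_interior pistar) (m c : R) (hm : 0 < m)
  (hmj : forall j, m <= pistar j) (hc : 0 < c) (hc1 : c <= m / 2)
  (hc2 : n%:R * c <= m / 2) (S : 'I_n.+1.-1 -> R)
  (hS : forall k, `|gradV pistar S k| < c) :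
  Vfun pistar S <= - ln (m / 2).
Proof.
case: hpi => hpos hsum.
rewrite big_ord_recr /= in hsum.
have hsum' : \sum_(k < n) pistar (@lowidx n.+1 k) = 1 - pistar ord_max.
  rewrite -hsum addrK; apply: eq_bigr => k _; congr pistar; exact: val_inj.
set D := 1 + \sum_(k < n) expR (S k).
have hD : 0 < D by rewrite ltr_wpDr // sumr_ge0 // => k _; rewrite expR_ge0.
have hq : forall k : 'I_n, pistar (@lowidx n.+1 k) - c < expR (S k) / D < pistar (@lowidx n.+1 k) + c.
  by move=> k; rewrite -ltr_distl; exact: hS.
set a := m / 2.
have ha : 0 < a by rewrite divr_gt0.
have hA : forall k : 'I_n, a * D <= expR (S k).
  move=> k; have /andP[h1 _] := hq k.
  rewrite -ler_pdivlMr // ltW // (le_lt_trans _ h1) //.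
  have := hmj (@lowidx n.+1 k); rewrite /a; lra.
have hB : a * D <= 1.
  have h1 : \sum_(k < n) expR (S k) <= (1 - pistar ord_max + n%:R * c) * D.
    apply: (@le_trans _ _ (\sum_(k < n) (pistar (@lowidx n.+1 k) + c) * D)).
      apply: ler_sum => k _.
      have /andP[_ h2] := hq k.
      by rewrite -ler_pdivrMr // ltW.
    by rewrite -mulr_suml big_split /= hsum' sumr_const card_ord mulr_natl.
  have h2 : 1 - pistar ord_max + n%:R * c <= 1 - a.
    have := hmj ord_max; rewrite /a; lra.
  have h3 : (1 - pistar ord_max + n%:R * c) * D <= (1 - a) * D by rewrite ler_pM2r.
  have e1 : (1 - a) * D = D - a * D by rewrite mulrBl mul1r.
  have eD : D = 1 + \sum_(k < n) expR (S k) by [].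
  move: h3 h1 e1 eD; generalize (\sum_(k < n) expR (S k)) => s; clearbody D; lra.
set l := ln a + ln D.
have hl0 : l <= 0.
  by rewrite /l -lnM ?posrE //; apply: ln_le0.
have hlS : forall k : 'I_n, l <= S k.
  by move=> k; rewrite /l -lnM ?posrE // -[S k]expRK ler_ln ?posrE ?mulr_gt0 ?expR_gt0.
rewrite /Vfun -/D.
have h4 : l * (1 - pistar ord_max) <= \sum_(k < n) S k * pistar (@lowidx n.+1 k).
  rewrite -hsum' mulr_sumr; apply: ler_sum => k _.
  by rewrite ler_wpM2r ?hlS // ltW.
have h5 : 0 <= pistar ord_max by rewrite ltW.
have h6 : l * pistar ord_max <= 0 by rewrite mulr_le0_ge0.
rewrite /l in h4 h6; lra.
Qed.

Theorem lemma3 (R : realType) (M : nat) (hM : (2 <= M)%N)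
  (pistar : 'I_M -> R) (hpi : in_simplex_interior pistar) :
  exists (cinf Rb : R),
    0 < cinf /\
    (forall S : 'I_M.-1 -> R, ~ (Vfun pistar S <= Rb) ->
       cinf <= enorm (gradV pistar S)) /\
    cinf <= dist_simplex_bd pistar /\
    (forall j : 'I_M, cinf <= pistar j).
Proof.
case: M hM pistar hpi => [//|n] hM pistar hpi.
have hn : (1 <= n)%N by [].
have [m hm hmj] : exists2 m : R, 0 < m & forall j, m <= pistar j.
  case: (@arg_minP _ _ _ ord0 xpredT pistar isT) => j _ hj.
  by exists (pistar j); [exact: hpi.1 | move=> k; exact: hj].
have hn1 : (1 : R) <= n%:R by rewrite ler1n.
have hn0 : (0 : R) < n%:R by apply: lt_le_trans hn1.
set c := m / 2 / n%:R.
have hm2 : 0 < m / 2 by rewrite divr_gt0.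
have hc : 0 < c by rewrite divr_gt0.
have hc2 : n%:R * c = m / 2 by rewrite /c mulrC divfK // gt_eqF.
have hc1 : c <= m / 2 by rewrite /c ler_pdivrMr // ler_peMr // ltW.
have hcm : c <= m by move: hc1 hm; lra.
exists c, (- ln (m / 2)); split => //; split; [|split].
- move=> S hV; rewrite leNgt; apply/negP => hlt; apply: hV.
  have hc2' : n%:R * c <= m / 2 by rewrite hc2.
  apply: (@core R n pistar hpi m c hm hmj hc hc1 hc2' S) => k.
  exact: le_lt_trans (norm_le_enorm (gradV pistar S) k) hlt.
- apply: lb_le_inf.
    exists (enorm (fun i => pistar i - (if i == ord0 then 1 else 0))).
    exists (fun i : 'I_n.+1 => if i == ord0 then 1 else 0) => //.
    split; last first. exists ord_max. rewrite ifF //; apply/eqP => /(congr1 val) /= h; by rewrite h in hn.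
    split; first by move=> j; case: ifP.
    rewrite (bigD1 ord0) //= big1 ?addr0 // => i /negbTE -> //.
  move=> _ [x [_ [j hj]] <-].
  apply: (le_trans hcm); apply: (le_trans (hmj j)).
  have := norm_le_enorm (fun i => pistar i - x i) j; rewrite /= hj subr0.
  by apply: le_trans; rewrite ler_norm.
- by move=> j; apply: le_trans hcm (hmj j).
Qed.
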